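(* Let $G$ be a trigraph containing a fence gadget $F$ attached to a set $S$ and satisfying the attachment rule in $G$ with set $X$, and let $Y=V(G)\setminus(V(F)\cup S\cup X)$. In any partial $4$-sequence from $G$, as long as no contraction has involved two vertices of $V(F)$, no part intersects both $X$ and $S$, no part intersects both $Y$ and $S$, and no part intersects both $X$ and $Y$.
   Context: A trigraph $G$ consists of a vertex set $V(G)$ and two disjoint sets of unordered pairs of distinct vertices: black edges and red edges; the red graph is formed by the red edges. Contracting two distinct vertices $u,v$ replaces them by a new vertex $w$ such that, for every other vertex $z$, $wz$ is black if $uz,vz$ are both black, a non-edge if both are non-edges, and red otherwise. A partial $d$-sequence from $G$ is a sequence of trigraphs starting at $G$, each obtained from the previous by one contraction, all of maximum red degree at most $d$. Each vertex $u$ of a later trigraph corresponds to the set $u(G)$ (its part) of vertices of $G$ merged into it; a contraction of $u,u'$ involves a vertex $v$ of $G$ if $v\in u(G)\cup u'(G)$, and involves a pair $v,v'$ if $v\in u(G),v'\in u'(G)$ or vice versa. A fence gadget is a trigraph $F$ on $A\cup B$, $A=\{a_1,\dots,a_6\}$, $B=\{b_1,\dots,b_6\}$, whose black edges are those of the cycles $a_1a_2a_3a_4a_5a_6a_1$ and $b_1b_2b_3b_4b_5b_6b_1$ together with $b_1a_6$, and whose red edges are $a_ib_i$ for $i\in[6]$ and $a_ib_{i+1}$ for $i\in[5]$. Inside a trigraph $G$, $F$ is attached to a nonempty set $S\subseteq V(G)\setminus V(F)$ if every vertex of $A$ is joined by a black edge to every vertex of $S$ and no vertex of $B$ is adjacent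 to a vertex of $S$. $F$ satisfies the attachment rule in $G$ if $V(F)$ is the vertex set of a connected component of the red graph of $G$ and there is a set $X\subseteq V(G)\setminus(V(F)\cup S)$ such that every vertex of $A$ has exactly $X\cup S$ as its set of neighbours outside $V(F)$, every vertex of $B$ has exactly $X$ as its set of neighbours outside $V(F)$ (all these edges black), and every vertex of $X$ is adjacent to every vertex of $S$. *)

(* Defs.v *)
From mathcomp Require Import all_boot.
Set Implicit Arguments. Unset Strict Implicit. Unset Printing Implicit Defensive.

(* The initial trigraph G has vertex set the whole finite type V, black    *)
(* edge relation [gb] and red edge relation [gr] (hypotheses of the main   *)
(* theorem: both symmetric, irreflexive, disjoint).                        *)

Definition trigraph_wf (V : finType) (gb gr : rel V) : Prop :=
  [/\ symmetric gb, symmetric gr, irreflexive gb, irreflexive gr &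
      forall x y, ~~ (gb x y && gr x y)].

(* Trigraphs occurring in a contraction sequence: every vertex is labelled *)
(* by its part (the set of vertices of G merged into it).                  *)
Record ltrig (V : finType) := LTrig {
  lverts : {set {set V}};
  lblack : rel {set V};
  lred   : rel {set V} }.

Section Seqs.
Variable V : finType.

Definition init_trig (gb gr : rel V) : ltrig V :=
  LTrig [set [set x] | x : V]
    (fun A B => [exists x, exists y, [&& A == [set x], B == [set y] & gb x y]])
    (fun A B => [exists x, exists y, [&& A == [set x], B == [set y] & gr x y]]).

Definition lnon (H : ltrig V) (x y : {set V}) := ~~ lblack H x y && ~~ lred H x y.

Definition contract (H : ltrig V) (u v : {set V}) : ltrig V :=
  let w := u :|: v in
  let nb z := lblack H u z && lblack H v z in
  let nn z := lnon H u z && lnon H v z in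
  LTrig (w |: ((lverts H :\ u) :\ v))
    (fun a b => if a == w then (b != w) && nb b
                else if b == w then nb a else lblack H a b)
    (fun a b => if a == w then [&& b != w, ~~ nb b & ~~ nn b]
                else if b == w then ~~ nb a && ~~ nn a else lred H a b).

Definition max_red_deg_le (d : nat) (H : ltrig V) : Prop :=
  forall a, a \in lverts H -> #|[set b in lverts H | lred H a b]| <= d.

Definition trig_after (gb gr : rel V) (s : seq ({set V} * {set V})) : ltrig V :=
  foldl (fun H p => contract H p.1 p.2) (init_trig gb gr) s.

Definition partial_seq (d : nat) (gb gr : rel V) (s : seq ({set V} * {set V})) : Prop :=
  (forall i, i < size s ->
     let p := nth (set0, set0) s i in
     [/\ p.1 \in lverts (trig_after gb gr (take i s)),
         p.2 \in lverts (trig_after gb gr (take i s)) & p.1 != p.2])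
  /\ (forall i, i <= size s -> max_red_deg_le d (trig_after gb gr (take i s))).

Definition involves_pair (u u' : {set V}) (v v' : V) : bool :=
  ((v \in u) && (v' \in u')) || ((v \in u') && (v' \in u)).

End Seqs.

(* Fence gadget.  Labels: (false, i) = a_{i+1}, (true, i) = b_{i+1}.      *)
Definition flabel := (bool * 'I_6)%type.

Definition cyc6 (i j : 'I_6) : bool :=
  (val j == (val i).+1 %% 6) || (val i == (val j).+1 %% 6).

(* black: the two 6-cycles, plus b_1 a_6 *)
Definition fence_black (x y : flabel) : bool :=
  if x.1 == y.1 then cyc6 x.2 y.2
  else ((x.1 && (val x.2 == 0) && (val y.2 == 5)) ||
        (y.1 && (val y.2 == 0) && (val x.2 == 5))).

(* red: a_i b_i (i in [6]) and a_i b_{i+1} (i in [5]) *)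
Definition fence_red (x y : flabel) : bool :=
  (x.1 != y.1) &&
  (let ai := if x.1 then y.2 else x.2 in
   let bi := if x.1 then x.2 else y.2 in
   (val bi == val ai) || (val bi == (val ai).+1)).

Section Fence.
Variable V : finType.
Variables (gb gr : rel V).

Definition adj (x y : V) := gb x y || gr x y.

Definition is_fence (f : flabel -> V) : Prop :=
  injective f /\
  forall x y, gb (f x) (f y) = fence_black x y /\ gr (f x) (f y) = fence_red x y.

Definition fA (f : flabel -> V) : {set V} := [set f (false, i) | i : 'I_6].
Definition fB (f : flabel -> V) : {set V} := [set f (true, i) | i : 'I_6].
Definition fV (f : flabel -> V) : {set V} := [set f x | x : flabel].

Definition attached (f : flabel -> V) (S : {set V}) : Prop :=
  [/\ S != set0, [disjoint S & fV f],
      (forall a s, a \in fA f -> s \in S -> gb a s) &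
      (forall b s, b \in fB f -> s \in S -> ~~ adj b s)].

Definition red_component (C : {set V}) : Prop :=
  C != set0 /\ forall x, x \in C -> forall y, connect gr x y = (y \in C).

Definition attachment_rule (f : flabel -> V) (S X : {set V}) : Prop :=
  [/\ red_component (fV f),
      [disjoint X & fV f :|: S],
      (forall a z, a \in fA f -> z \notin fV f ->
         (adj a z = (z \in X :|: S)) /\ (z \in X :|: S -> gb a z)),
      (forall b z, b \in fB f -> z \notin fV f ->
         (adj b z = (z \in X)) /\ (z \in X -> gb b z)) &
      (forall x s, x \in X -> s \in S -> adj x s)].

End Fence.

(* Main.v *)
Require Import Defs.
From mathcomp Require Import all_boot.
Set Implicit Arguments. Unset Strict Implicit. Unset Printing Implicit Defensive.

Section Proof.
Variables (V : finType) (gb gr : rel V).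
Hypothesis gbC : symmetric gb.
Hypothesis grC : symmetric gr.
Hypothesis gbr : forall x y, ~~ (gb x y && gr x y).

Definition allb (P Q : {set V}) :=
  [forall x, (x \in P) ==> [forall y, (y \in Q) ==> gb x y]].
Definition alln (P Q : {set V}) :=
  [forall x, (x \in P) ==> [forall y, (y \in Q) ==> ~~ gb x y && ~~ gr x y]].

Lemma allbP (P Q : {set V}) : reflect (forall x y, x \in P -> y \in Q -> gb x y) (allb P Q).
Proof.
apply: (iffP forallP) => H.
  by move=> x y xP yQ; have /implyP/(_ xP)/forallP/(_ y)/implyP/(_ yQ) := H x.
by move=> x; apply/implyP => xP; apply/forallP => y; apply/implyP => yQ; apply: H.
Qed.

Lemma allnP (P Q : {set V}) : reflect (forall x y, x \in P -> y \in Q -> ~~ gb x y && ~~ gr x y) (alln P Q).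
Proof.
apply: (iffP forallP) => H.
  by move=> x y xP yQ; have /implyP/(_ xP)/forallP/(_ y)/implyP/(_ yQ) := H x.
by move=> x; apply/implyP => xP; apply/forallP => y; apply/implyP => yQ; apply: H.
Qed.

Lemma allbU (u v Q : {set V}) : allb (u :|: v) Q = allb u Q && allb v Q.
Proof.
apply/allbP/andP => [H|[/allbP H1 /allbP H2]].
  by split; apply/allbP => x y xP yQ; apply: H; rewrite // in_setU xP ?orbT.
by move=> x y /setUP[] xP yQ; [apply: H1|apply: H2].
Qed.

Lemma allnU (u v Q : {set V}) : alln (u :|: v) Q = alln u Q && alln v Q.
Proof.
apply/allnP/andP => [H|[/allnP H1 /allnP H2]].
  by split; apply/allnP => x y xP yQ; apply: H; rewrite // in_setU xP ?orbT.
by move=> x y /setUP[] xP yQ; [apply: H1|apply: H2].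
Qed.

Lemma allbC (P Q : {set V}) : allb P Q = allb Q P.
Proof. by apply/allbP/allbP => H x y xP yQ; rewrite gbC; apply: H. Qed.

Lemma allnC (P Q : {set V}) : alln P Q = alln Q P.
Proof. by apply/allnP/allnP => H x y xP yQ; rewrite gbC grC; apply: H. Qed.

Lemma alln_allb (P Q : {set V}) : P != set0 -> Q != set0 -> alln P Q -> ~~ allb P Q.
Proof.
move=> /set0Pn[x xP] /set0Pn[y yQ] /allnP/(_ x y xP yQ)/andP[h _].
by apply/allbP => /(_ x y xP yQ); rewrite (negbTE h).
Qed.

Lemma disjsU (u v Q : {set V}) :
  [disjoint u :|: v & Q] = [disjoint u & Q] && [disjoint v & Q].
Proof. by rewrite -!setI_eq0 setIUl setU_eq0. Qed.

Definition Inv (H : ltrig V) : Prop :=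
 [/\ forall P, P \in lverts H -> P != set0,
     forall P Q, P \in lverts H -> Q \in lverts H -> P != Q -> [disjoint P & Q],
     forall x, exists2 P, P \in lverts H & x \in P,
     forall P Q, P \in lverts H -> Q \in lverts H -> P != Q -> lblack H P Q = allb P Q &
     forall P Q, P \in lverts H -> Q \in lverts H -> P != Q ->
        lred H P Q = ~~ allb P Q && ~~ alln P Q].

Lemma allb1 x y : allb [set x] [set y] = gb x y.
Proof.
apply/allbP/idP => [H|h x' y' /set1P -> /set1P ->//]; exact: H (set11 x) (set11 y).
Qed.

Lemma alln1 x y : alln [set x] [set y] = ~~ gb x y && ~~ gr x y.
Proof.
apply/allnP/idP => [H|h x' y' /set1P -> /set1P ->//]; exact: H (set11 x) (set11 y).
Qed.

Lemma ex1 (r : rel V) x y :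
  [exists x', exists y', [&& [set x] == [set x'], [set y] == [set y'] & r x' y']] = r x y.
Proof.
apply/existsP/idP => [[x' /existsP[y' /and3P[/eqP/set1_inj-> /eqP/set1_inj-> //]]]|h].
by exists x; apply/existsP; exists y; rewrite !eqxx.
Qed.

Lemma Inv_init : Inv (init_trig gb gr).
Proof.
split => /=.
- by move=> P /imsetP[x _ ->]; apply/set0Pn; exists x; rewrite set11.
- move=> P Q /imsetP[x _ ->] /imsetP[y _ ->] ne.
  rewrite disjoints1 in_set1; apply: contra ne => /eqP->; done.
- by move=> x; exists [set x]; rewrite ?set11 //; apply/imsetP; exists x.
- by move=> P Q /imsetP[x _ ->] /imsetP[y _ ->] _; rewrite ex1 allb1.
- move=> P Q /imsetP[x _ ->] /imsetP[y _ ->] _; rewrite ex1 allb1 alln1.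
  have := gbr x y; by case: (gb x y); case: (gr x y).
Qed.

Section Contract.
Variables (H : ltrig V) (u v : {set V}).
Hypotheses (IH : Inv H) (uH : u \in lverts H) (vH : v \in lverts H) (uv : u != v).

Lemma in_contract (P : {set V}) :
  (P \in lverts (contract H u v)) = (P == u :|: v) || [&& P != v, P != u & P \in lverts H].
Proof. by rewrite /= in_setU1 !in_setD1. Qed.

Lemma old_neq (P : {set V}) : P \in lverts H -> P != u -> P != v -> P != u :|: v.
Proof.
case: IH => ne dj _ _ _ PH Pu Pv; apply/eqP => E.
have /set0Pn[x xu] := ne u uH.
have uP : u != P by rewrite eq_sym.
have := disjointFr (dj u P uH PH uP) xu.
by rewrite E in_setU xu.
Qed.

Lemma lnon_eq (P Q : {set V}) : P \in lverts H -> Q \in lverts H -> P != Q -> lnon H P Q = alln P Q.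
Proof.
case: IH => ne _ _ bl rd PH QH PQ; rewrite /lnon bl // rd //.
have := @alln_allb P Q (ne P PH) (ne Q QH).
by case: (allb P Q); case: (alln P Q) => // /(_ isT).
Qed.

Lemma Inv_contract : Inv (contract H u v).
Proof.
have IH' := IH; case: IH' => ne dj cov bl rd.
have une := ne u uH; have vne := ne v vH.
split.
- move=> P; rewrite in_contract => /orP[/eqP->|/and3P[_ _ PH]]; last exact: ne.
  by move: une; apply: contra; rewrite -subset0 => /(subset_trans (subsetUl u v)); rewrite subset0.
- move=> P Q; rewrite !in_contract => /orP[/eqP->|/and3P[Pv Pu PH]]
     /orP[/eqP->|/and3P[Qv Qu QH]] PQ.
  + by rewrite eqxx in PQ.
  + by rewrite disjsU; apply/andP; split; apply: dj; rewrite // eq_sym.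
  + by rewrite disjoint_sym disjsU; apply/andP; split; rewrite disjoint_sym; apply: dj.
  + exact: dj.
- move=> x; have [P PH xP] := cov x.
  case: (P =P u) => [E|/eqP Pu].
    by exists (u :|: v); rewrite ?in_contract ?eqxx // in_setU -E xP.
  case: (P =P v) => [E|/eqP Pv].
    by exists (u :|: v); rewrite ?in_contract ?eqxx // in_setU -E xP orbT.
  by exists P; rewrite // in_contract Pu Pv PH orbT.
- move=> P Q; rewrite !in_contract => /orP[/eqP->|/and3P[Pv Pu PH]]
     /orP[/eqP->|/and3P[Qv Qu QH]] PQ /=.
  + by rewrite eqxx in PQ.
  + rewrite eqxx (negbTE (old_neq QH Qu Qv)) /= allbU bl // ?bl // eq_sym //.
  + rewrite eqxx (negbTE (old_neq PH Pu Pv)) /= allbC allbU bl // ?bl //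
      ?(allbC u) ?(allbC v) // eq_sym //.
  + by rewrite (negbTE (old_neq PH Pu Pv)) (negbTE (old_neq QH Qu Qv)) bl.
- move=> P Q; rewrite !in_contract => /orP[/eqP->|/and3P[Pv Pu PH]]
     /orP[/eqP->|/and3P[Qv Qu QH]] PQ /=.
  + by rewrite eqxx in PQ.
  + rewrite eqxx (negbTE (old_neq QH Qu Qv)) /= allbU allnU.
    rewrite bl // ?(eq_sym u) // bl // ?(eq_sym v) // lnon_eq // ?(eq_sym u) //.
    by rewrite lnon_eq // ?(eq_sym v) //.
  + rewrite eqxx (negbTE (old_neq PH Pu Pv)) /= allbC allnC allbU allnU.
    have uP : u != P by rewrite eq_sym.
    have vP : v != P by rewrite eq_sym.
    by rewrite bl // bl // lnon_eq // lnon_eq.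
  + by rewrite (negbTE (old_neq PH Pu Pv)) (negbTE (old_neq QH Qu Qv)) rd.
Qed.
End Contract.

Variable f : flabel -> V.

Definition F1 (H : ltrig V) := forall P, P \in lverts H -> forall t1 t2,
  t1 \in fV f -> t2 \in fV f -> t1 \in P -> t2 \in P -> t1 = t2.

Lemma F1_init : F1 (init_trig gb gr).
Proof. by move=> P /imsetP[x _ ->] t1 t2 _ _ /set1P-> /set1P->. Qed.

Lemma F1_contract H u v : F1 H -> u \in lverts H -> v \in lverts H ->
  (forall t1 t2, t1 \in fV f -> t2 \in fV f -> ~~ involves_pair u v t1 t2) ->
  F1 (contract H u v).
Proof.
move=> F uH vH Hn P; rewrite /= in_setU1 !in_setD1 => /orP[/eqP->|/and3P[_ _ PH]];
  last exact: F.
move=> t1 t2 h1 h2 /setUP[] a /setUP[] b.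
- exact: F uH _ _ h1 h2 a b.
- by have := Hn t1 t2 h1 h2; rewrite /involves_pair a b.
- by have := Hn t1 t2 h1 h2; rewrite /involves_pair a b orbT.
- exact: F vH _ _ h1 h2 a b.
Qed.

Section Seq.
Variable s : seq ({set V} * {set V}).
Hypothesis Hps : partial_seq 4 gb gr s.
Hypothesis Hni : forall i, i < size s ->
     forall v v', v \in fV f -> v' \in fV f ->
       ~~ involves_pair (nth (set0, set0) s i).1 (nth (set0, set0) s i).2 v v'.

Lemma after_S i : i < size s -> trig_after gb gr (take i.+1 s) =
  contract (trig_after gb gr (take i s)) (nth (set0,set0) s i).1 (nth (set0,set0) s i).2.
Proof. by move=> Hi; rewrite (take_nth (set0,set0)) // /trig_after foldl_rcons. Qed.

Lemma Inv_after i : i <= size s ->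
  Inv (trig_after gb gr (take i s)) /\ F1 (trig_after gb gr (take i s)).
Proof.
elim: i => [|i IHi] Hi; first by rewrite take0; split; [exact: Inv_init|exact: F1_init].
have [I1 F1'] := IHi (ltnW Hi).
case: Hps => H1 _; have [a b c] := H1 i Hi.
rewrite after_S //; split; first exact: Inv_contract.
by apply: F1_contract => //; apply: Hni.
Qed.

End Seq.

Definition pt (H : ltrig V) t := odflt set0 [pick Q in lverts H | t \in Q].

Lemma ptP H t : Inv H -> pt H t \in lverts H /\ t \in pt H t.
Proof.
case=> _ _ cov _ _; rewrite /pt; case: pickP => [Q /andP[]//|none].
by have [Q QH tQ] := cov t; have := none Q; rewrite QH tQ.
Qed.

Lemma deg5 H P c : Inv H -> F1 H -> P \in lverts H -> injective f ->
  (forall j, f (c,j) \notin P -> forall Q, Q \in lverts H -> f (c,j) \in Q -> lred H P Q) ->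
  4 < #|[set Q in lverts H | lred H P Q]|.
Proof.
move=> I F PH finj Hr.
have inF : forall j, f (c, j) \in fV f by move=> j; apply/imsetP; exists (c, j).
pose J := [set j : 'I_6 | f (c,j) \notin P].
pose g j := pt H (f (c, j)).
have sub : g @: J \subset [set Q in lverts H | lred H P Q].
  apply/subsetP => Q /imsetP[j]; rewrite inE => nP ->.
  have [gH tg] := ptP (f (c, j)) I.
  by rewrite inE gH /=; exact: (Hr j nP _ gH tg).
have cg : #|g @: J| = #|J|.
  apply: card_in_imset => j1 j2 _ _ E.
  have [gH tg] := ptP (f (c, j1)) I.
  have [_ tg2] := ptP (f (c, j2)) I.
  rewrite -/(g j1) -/(g j2) -E in tg tg2.
  have := F _ gH _ _ (inF j1) (inF j2) tg tg2.
  by move/finj => [].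
have cJ : 1 >= #|~: J|.
  apply/card_le1_eqP => j1 j2; rewrite !inE !negbK => h1 h2.
  by have /finj[] := F _ PH _ _ (inF j1) (inF j2) h1 h2.
have := cardsC J; rewrite card_ord => e.
apply: leq_trans (subset_leq_card sub); rewrite cg.
by rewrite -(leq_add2r #|~: J|) e; exact: (leq_add (leqnn 5) cJ).
Qed.

Lemma mix H P Q x y t : Inv H -> P \in lverts H -> Q \in lverts H -> P != Q ->
  x \in P -> y \in P -> t \in Q -> gb t x -> ~~ (gb t y || gr t y) -> lred H P Q.
Proof.
case=> _ _ _ _ rd PH QH PQ xP yP tQ hx hy; rewrite rd //; apply/andP; split.
- apply/allbP => /(_ y t yP tQ); rewrite gbC => e; by rewrite e in hy.
- apply/allnP => /(_ x t xP tQ); by rewrite gbC hx.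
Qed.

End Proof.

Lemma bad (V : finType) (gb gr : rel V) (f : flabel -> V) H P c x y :
  symmetric gb -> Inv gb gr H -> F1 f H -> P \in lverts H -> injective f ->
  #|[set Q in lverts H | lred H P Q]| <= 4 -> x \in P -> y \in P ->
  (forall j, gb (f (c, j)) x) -> (forall j, ~~ adj gb gr (f (c, j)) y) -> False.
Proof.
move=> gbC I F PH finj Hdeg xP yP hx hy.
suff : 4 < #|[set Q in lverts H | lred H P Q]| by rewrite ltnNge Hdeg.
apply: (deg5 I F PH finj (c := c)).
move=> j nP Q QH tQ; apply: (mix gbC I PH QH _ xP yP tQ (hx j) (hy j)).
by apply: contra nP => /eqP->.
Qed.

Theorem lemma4p7 (V : finType) (gb gr : rel V) (f : flabel -> V) (S X : {set V})
  (s : seq ({set V} * {set V})) :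
  trigraph_wf gb gr ->
  is_fence gb gr f ->
  attached gb gr f S ->
  attachment_rule gb gr f S X ->
  partial_seq 4 gb gr s ->
  (forall i, i < size s ->
     forall v v', v \in fV f -> v' \in fV f ->
       ~~ involves_pair (nth (set0, set0) s i).1 (nth (set0, set0) s i).2 v v') ->
  let Y := ~: (fV f :|: S :|: X) in
  forall i, i <= size s ->
  forall P, P \in lverts (trig_after gb gr (take i s)) ->
    [/\ ~~ (~~ [disjoint P & X] && ~~ [disjoint P & S]),
        ~~ (~~ [disjoint P & Y] && ~~ [disjoint P & S]) &
        ~~ (~~ [disjoint P & X] && ~~ [disjoint P & Y])].
Proof.
move=> [gbC grC _ _ gbr] [finj _] [_ _ attA attB] [_ dX arA arB _] Hps Hni Y i Hi P PH.
have [I F] := Inv_after gbC grC gbr Hps Hni Hi.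
have Hdeg := Hps.2 i Hi P PH.
have memA j : f (false, j) \in fA f by apply/imsetP; exists j.
have memB j : f (true, j) \in fB f by apply/imsetP; exists j.
have nFX z : z \in X -> z \notin fV f.
  by move=> zX; have := disjointFr dX zX; rewrite in_setU => /norP[].
have inY z : z \in Y -> [/\ z \notin fV f, z \notin S & z \notin X].
  by rewrite /Y in_setC !in_setU => /norP[/norP[]].
have hxB x : x \in X -> forall j, gb (f (true, j)) x.
  by move=> xX j; exact: (arB _ x (memB j) (nFX x xX)).2 xX.
split; apply/negP => /andP[]; rewrite -!setI_eq0 =>
  /set0Pn[x /setIP[xP xX]] /set0Pn[y /setIP[yP yS]].
- apply: (bad gbC I F PH finj Hdeg xP yP (hxB x xX)).
  by move=> j; apply: attB (memB j) yS.
- have [xF xS xXX] := inY x xX.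
  apply: (bad gbC I F PH finj Hdeg yP xP (c := false)).
    by move=> j; apply: attA (memA j) yS.
  by move=> j; rewrite (arA _ x (memA j) xF).1 in_setU negb_or xXX.
- have [yF _ yX] := inY y yS.
  apply: (bad gbC I F PH finj Hdeg xP yP (hxB x xX)).
  by move=> j; rewrite (arB _ y (memB j) yF).1.
Qed.
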